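(* For every set of formulas $\Gamma$ and formula $\alpha$: $\circ^{\#}(Var(\Gamma\cup\{\alpha\})),\Gamma\vdash_{LFI3}\alpha$ if and only if $\Gamma\vdash_{LFI1}\alpha$, where $\circ^{\#}(X)=\{\circ^{\#}p: p\in X\}$.
   Context: Formulas are built from a countable set of propositional variables using unary $\neg,\circ$ and binary $\land,\lor,\to$. Define $\bullet\alpha:=\neg\circ\alpha$, $\circ^*\alpha:=(\alpha\land\circ\alpha\land\circ\circ\alpha)\lor(\neg\alpha\land\circ\alpha\land\circ\circ\alpha)$ and $\circ^{\#}\alpha:=\circ^*\alpha\lor(\bullet\alpha\land\circ\circ\alpha)$. $Var(\Delta)$ is the set of propositional variables occurring in $\Delta$. On $\{0,1\}$ use Boolean $\land,\lor,\to,\sim$. Let $\mathbb{B}=\{x\in\{0,1\}^3: x_1\lor x_2=1,\ x_3\lor\sim(x_1\land x_2)=1\}$. The LFI3 algebra on $\mathbb{B}$: $a\dot\land b=(a_1\land b_1,\ a_2\lor b_2,\ (\sim a_2\land b_3)\lor(a_3\land\sim b_2)\lor(a_3\land b_3))$; $a\dot\lor b=(a_1\lor b_1,\ a_2\land b_2,\ (\sim a_1\land b_3)\lor(a_3\land\sim b_1)\lor(a_3\land b_3))$; $a\dot\to b=(a_1\to b_1,\ b_2\land(\sim a_2\lor a_3),\ (\sim a_2\land b_3)\lor(\sim a_2\land a_3\land\sim b_1)\lor(a_3\land b_3)\lor(\sim a_1\land a_3\land\sim b_1))$; $\dot\neg a=(a_2,a_1,a_3)$; $\dot\circ a=(\sim(a_1\land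 a_2),a_3,a_3\land\sim(a_1\land a_2))$; designated set $\{x:x_1=1\}$. LFI1 is the three-valued matrix logic on $\{1,\frac12,0\}$ with designated set $\{1,\frac12\}$, $\land=\min$, $\lor=\max$ (order $0<\frac12<1$), $a\to c=1$ if $a=0$ and $a\to c=c$ otherwise, $\neg1=0$, $\neg\frac12=\frac12$, $\neg0=1$, $\circ1=\circ0=1$, $\circ\frac12=0$. For both matrix logics, $\Gamma\vdash\alpha$ iff every homomorphic valuation designating all of $\Gamma$ designates $\alpha$. *)

(* Defs.v *)
From Stdlib Require Import Bool.

Inductive formula : Type :=
| Var : nat -> formula
| Neg : formula -> formula
| Circ : formula -> formula
| And : formula -> formula -> formula
| Or : formula -> formula -> formula
| Imp : formula -> formula -> formula.

Definition bullet (a : formula) : formula := Neg (Circ a).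

Definition circ_star (a : formula) : formula :=
  Or (And (And a (Circ a)) (Circ (Circ a)))
     (And (And (Neg a) (Circ a)) (Circ (Circ a))).

Definition circ_sharp (a : formula) : formula :=
  Or (circ_star a) (And (bullet a) (Circ (Circ a))).

Fixpoint occurs (p : nat) (f : formula) : Prop :=
  match f with
  | Var q => p = q
  | Neg a | Circ a => occurs p a
  | And a b | Or a b | Imp a b => occurs p a \/ occurs p b
  end.

Definition fset := formula -> Prop.

Definition VarsOf (Gamma : fset) (alpha : formula) (p : nat) : Prop :=
  (exists g, Gamma g /\ occurs p g) \/ occurs p alpha.

Definition circ_sharp_set (X : nat -> Prop) : fset :=
  fun f => exists p, X p /\ f = circ_sharp (Var p).

Definition union (A B : fset) : fset := fun f => A f \/ B f.

Definition tri := (bool * bool * bool)%type.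
Definition c1 (a : tri) : bool := fst (fst a).
Definition c2 (a : tri) : bool := snd (fst a).
Definition c3 (a : tri) : bool := snd a.

Definition inB (x : tri) : Prop :=
  (c1 x || c2 x) = true /\ (c3 x || negb (c1 x && c2 x)) = true.

Definition impb (x y : bool) : bool := implb x y.

Definition and3 (a b : tri) : tri :=
  (c1 a && c1 b, c2 a || c2 b,
   (negb (c2 a) && c3 b) || (c3 a && negb (c2 b)) || (c3 a && c3 b)).

Definition or3 (a b : tri) : tri :=
  (c1 a || c1 b, c2 a && c2 b,
   (negb (c1 a) && c3 b) || (c3 a && negb (c1 b)) || (c3 a && c3 b)).

Definition imp3 (a b : tri) : tri :=
  (impb (c1 a) (c1 b),
   c2 b && (negb (c2 a) || c3 a),
   (negb (c2 a) && c3 b) || (negb (c2 a) && c3 a && negb (c1 b))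
   || (c3 a && c3 b) || (negb (c1 a) && c3 a && negb (c1 b))).

Definition neg3 (a : tri) : tri := (c2 a, c1 a, c3 a).

Definition circ3 (a : tri) : tri :=
  (negb (c1 a && c2 a), c3 a, c3 a && negb (c1 a && c2 a)).

Fixpoint eval3 (v : nat -> tri) (f : formula) : tri :=
  match f with
  | Var p => v p
  | Neg a => neg3 (eval3 v a)
  | Circ a => circ3 (eval3 v a)
  | And a b => and3 (eval3 v a) (eval3 v b)
  | Or a b => or3 (eval3 v a) (eval3 v b)
  | Imp a b => imp3 (eval3 v a) (eval3 v b)
  end.

Definition des3 (x : tri) : Prop := c1 x = true.

(* Homomorphic valuations into the LFI3 algebra on B are exactly the
   eval3 v with v mapping every variable into B. *)
Definition LFI3_cons (Gamma : fset) (alpha : formula) : Prop :=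
  forall v : nat -> tri, (forall p, inB (v p)) ->
    (forall g, Gamma g -> des3 (eval3 v g)) -> des3 (eval3 v alpha).

Inductive V3 : Type := One | Half | Zero.

Definition rank (x : V3) : nat :=
  match x with Zero => 0 | Half => 1 | One => 2 end.

Definition min1 (a b : V3) : V3 := if Nat.leb (rank a) (rank b) then a else b.
Definition max1 (a b : V3) : V3 := if Nat.leb (rank a) (rank b) then b else a.

Definition imp1 (a c : V3) : V3 :=
  match a with Zero => One | _ => c end.

Definition neg1 (a : V3) : V3 :=
  match a with One => Zero | Half => Half | Zero => One end.

Definition circ1 (a : V3) : V3 :=
  match a with Half => Zero | _ => One end.

Fixpoint eval1 (v : nat -> V3) (f : formula) : V3 :=
  match f with
  | Var p => v p
  | Neg a => neg1 (eval1 v a)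
  | Circ a => circ1 (eval1 v a)
  | And a b => min1 (eval1 v a) (eval1 v b)
  | Or a b => max1 (eval1 v a) (eval1 v b)
  | Imp a b => imp1 (eval1 v a) (eval1 v b)
  end.

Definition des1 (x : V3) : Prop := x = One \/ x = Half.

Definition LFI1_cons (Gamma : fset) (alpha : formula) : Prop :=
  forall v : nat -> V3,
    (forall g, Gamma g -> des1 (eval1 v g)) -> des1 (eval1 v alpha).

(* Main.v *)
Require Import Defs.
From Stdlib Require Import Bool.

Definition h (x : V3) : tri :=
  match x with One => (true,false,false) | Half => (true,true,true) | Zero => (false,true,false) end.

Definition g3 (x : tri) : V3 :=
  match x with
  | (true,false,_) => One
  | (true,true,_) => Half
  | _ => Zero
  end.

Lemma hom (w : nat -> V3) f : eval3 (fun p => h (w p)) f = h (eval1 w f).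
Proof.
  induction f; simpl; try rewrite IHf; try (rewrite IHf1, IHf2); auto;
  repeat match goal with |- context [eval1 w ?f] => destruct (eval1 w f) end;
  reflexivity.
Qed.

Lemma agree v v' f : (forall p, occurs p f -> v p = v' p) -> eval3 v f = eval3 v' f.
Proof.
  induction f; simpl; intros H; try rewrite IHf; try (rewrite IHf1, IHf2); auto.
Qed.

Lemma des_h x : des3 (h x) <-> des1 x.
Proof. unfold des3, des1; destruct x; cbv; intuition discriminate. Qed.

Lemma sharp1 w p : des1 (eval1 w (circ_sharp (Var p))).
Proof. unfold des1; simpl; destruct (w p); simpl; auto. Qed.

Lemma sharp3 (x : tri) : inB x -> des3 (eval3 (fun _ => x) (circ_sharp (Var 0))) -> x = h (g3 x).
Proof.
  destruct x as [[[|] [|]] [|]]; unfold inB, des3; cbv; intuition discriminate.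
Qed.

Theorem theorem20 (Gamma : fset) (alpha : formula) :
  LFI3_cons (union (circ_sharp_set (VarsOf Gamma alpha)) Gamma) alpha
  <-> LFI1_cons Gamma alpha.
Proof.
  split.
  - intros H w Hw. apply des_h. rewrite <- hom. apply H.
    + intros p. destruct (w p); cbv; intuition congruence.
    + intros f [[p [_ ->]] | Hg].
      * rewrite hom. apply des_h, sharp1.
      * rewrite hom. apply des_h, Hw, Hg.
  - intros H v Hv Hg.
    set (w := fun p => g3 (v p)).
    assert (Hs : forall p, VarsOf Gamma alpha p -> v p = h (w p)).
    { intros p Hp. apply sharp3; [apply Hv|].
      specialize (Hg (circ_sharp (Var p)) (or_introl (ex_intro _ p (conj Hp eq_refl)))).
      exact Hg. }
    assert (Ha : des1 (eval1 w alpha)).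
    { apply H. intros f Hf. apply des_h. rewrite <- hom.
      rewrite <- (agree v).
      - apply Hg. right; exact Hf.
      - intros p Hp. apply Hs. left. exists f; auto. }
    apply des_h in Ha. rewrite <- hom in Ha.
    rewrite (agree v (fun p => h (w p))); auto.
    intros p Hp; apply Hs; right; auto.
Qed.
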